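(* Let $A\subseteq\mathbb N_0\times\mathbb S$ be a Schnorr test for a non-degenerate computable forecasting system $\varphi$ such that $A_n$ is a partial cut for every $n\in\mathbb N_0$. Then there is a recursive map $\tilde e:\mathbb N_0\times\mathbb S\to\mathbb N_0$ such that $\tilde e(\cdot,s)$ is a growth function for every $s\in\mathbb S$ and $$\overline P_\varphi\big([A_n^{\ge\ell}]\mid s\big)\le2^{-N}\quad\text{for all }(N,n,s)\in\mathbb N_0^2\times\mathbb S\text{ and all }\ell\ge\tilde e(N,s).$$
   Context: $\mathbb N_0=\{0,1,\dots\}$; $\Omega=\{0,1\}^{\mathbb N}$; $\mathbb S$ finite binary strings, $\square$ empty string, $|s|$ length, $\omega^n$ first $n$ entries; $[s]=\{\omega:\omega^{|s|}=s\}$, $[A]=\bigcup_{s\in A}[s]$; a partial cut is a prefix-free subset of $\mathbb S$. For $A\subseteq\mathbb N_0\times\mathbb S$: $A_n=\{s:(n,s)\in A\}$, $A_n^{<\ell}=\{s\in A_n:|s|<\ell\}$, $A_n^{\ge\ell}=\{s\in A_n:|s|\ge\ell\}$. $\mathcal I$: nonempty closed subintervals of $[0,1]$; $\overline E_I(f)=\max_{p\in I}[pf(1)+(1-p)f(0)]$. Forecasting system $\varphi:\mathbb S\to\mathcal I$, $\underline\varphi=\min\varphi$, $\overline\varphi=\max\varphi$; non-degenerate if $\underline\varphi(s)<1$ and $\overline\varphi(s)>0$ for all $s$; computable if $\underline\varphi,\overline\varphi$ are computable real maps. Supermartingale: $M:\mathbb S\to\mathbb R$ with $\overline E_{\varphi(s)}(M(s\,\cdot))\le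 M(s)$. For $G\subseteq\Omega$, $\overline P_\varphi(G\mid s)=\inf\{M(s):M\text{ supermartingale for }\varphi,\ \liminf_nM(\omega^n)\ge\mathbb 1_G(\omega)\ \forall\omega\in[s]\}$ and $\overline P_\varphi(G)=\overline P_\varphi(G\mid\square)$. A Schnorr test for $\varphi$ is a recursive $A\subseteq\mathbb N_0\times\mathbb S$ with $\overline P_\varphi([A_n])\le2^{-n}$ for all $n$, and a recursive $e:\mathbb N_0^2\to\mathbb N_0$ with $\overline P_\varphi([A_n]\setminus[A_n^{<\ell}])\le2^{-N}$ for all $(N,n)$ and $\ell\ge e(N,n)$. A growth function is a recursive, non-decreasing, unbounded map $\mathbb N_0\to\mathbb N_0$. *)

(* Defs.v *)
From HB Require Import structures.
From mathcomp Require Import all_boot all_order all_algebra.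
From mathcomp Require Import all_classical all_reals.
From mathcomp Require Import ereal topology normedtype sequences.
Set Implicit Arguments. Unset Strict Implicit. Unset Printing Implicit Defensive.
Import Order.TTheory GRing.Theory Num.Theory.
Local Open Scope classical_set_scope.
Local Open Scope ring_scope.

Inductive prog : Type :=
| PZero
| PSucc
| PProj of nat
| PComp of prog & seq prog
| PPrec of prog & prog
| PMu of prog.

Inductive eval : prog -> seq nat -> nat -> Prop :=
| ev_zero v : eval PZero v 0
| ev_succ v : eval PSucc v (head 0%N v).+1
| ev_proj i v : eval (PProj i) v (nth 0%N v i)
| ev_comp f gs v ws y : evals gs v ws -> eval f ws y -> eval (PComp f gs) v y
| ev_prec0 f g v y : eval f v y -> eval (PPrec f g) (0%N :: v) y
| ev_precS f g n v z y : eval (PPrec f g) (n :: v) z ->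
    eval g [:: n, z & v] y -> eval (PPrec f g) (n.+1 :: v) y
| ev_mu f v y : eval f (y :: v) 0 ->
    (forall z, (z < y)%N -> exists w, eval f (z :: v) w.+1) ->
    eval (PMu f) v y
with evals : seq prog -> seq nat -> seq nat -> Prop :=
| evs_nil v : evals [::] v [::]
| evs_cons g gs v w ws : eval g v w -> evals gs v ws -> evals (g :: gs) v (w :: ws).

Definition rec1 (f : nat -> nat) : Prop :=
  exists p, forall n, eval p [:: n] (f n).
Definition rec2 (f : nat -> nat -> nat) : Prop :=
  exists p, forall m n, eval p [:: m; n] (f m n).

(* Binary strings S = seq bool, coded injectively as naturals:
   s is coded by the number with binary expansion 1 s. *)
Definition code (s : seq bool) : nat := foldl (fun acc (b : bool) => acc.*2 + b)%N 1%N s.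

Definition rec_setNS (A : nat -> seq bool -> Prop) : Prop :=
  exists chi, rec2 chi /\ forall n s, A n s <-> chi n (code s) = 1%N.
Definition rec_NN (e : nat -> nat -> nat) : Prop := rec2 e.
Definition rec_NS (e : nat -> seq bool -> nat) : Prop :=
  exists g, rec2 g /\ forall N s, e N s = g N (code s).

Definition growth (f : nat -> nat) : Prop :=
  rec1 f /\ (forall m n, (m <= n)%N -> (f m <= f n)%N) /\
  (forall m, exists n, (m <= f n)%N).

Definition computable_real_map {R : realType} (f : seq bool -> R) : Prop :=
  exists a b c : nat -> nat -> nat, [/\ rec2 a, rec2 b, rec2 c &
    forall s n, `| f s - ((a (code s) n)%:R - (b (code s) n)%:R) / (c (code s) n).+1%:R |
                <= (2 : R) ^- n].

(* A forecasting system phi : S -> I is given by its lower and upper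
   endpoints lo = underline phi, hi = overline phi. *)
Definition forecasting_system {R : realType} (lo hi : seq bool -> R) : Prop :=
  forall s, 0 <= lo s /\ lo s <= hi s /\ hi s <= 1.

Definition non_degenerate {R : realType} (lo hi : seq bool -> R) : Prop :=
  forall s, lo s < 1 /\ 0 < hi s.

Definition computable_fs {R : realType} (lo hi : seq bool -> R) : Prop :=
  computable_real_map lo /\ computable_real_map hi.

Definition upE {R : realType} (l h : R) (f : bool -> R) : R :=
  sup [set p * f true + (1 - p) * f false | p in [set p | l <= p <= h]].

Definition supermartingale {R : realType} (lo hi : seq bool -> R)
  (M : seq bool -> R) : Prop :=
  forall s, upE (lo s) (hi s) (fun x => M (rcons s x)) <= M s.

(* Omega = nat -> bool ; omega^n = mkseq omega n ; cylinders *)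
Definition cyl (s : seq bool) : set (nat -> bool) :=
  [set w | mkseq w (size s) = s].
Definition cylA (B : seq bool -> Prop) : set (nat -> bool) :=
  [set w | exists2 s, B s & cyl s w].

Definition indicE {R : realType} (G : set (nat -> bool)) (w : nat -> bool) : \bar R :=
  ((if `[< G w >] then 1 else 0 : R)%:E)%E.

Definition upP {R : realType} (lo hi : seq bool -> R) (G : set (nat -> bool))
  (s : seq bool) : \bar R :=
  ereal_inf [set (M s)%:E | M in [set M | supermartingale lo hi M /\
     forall w, cyl s w ->
       (indicE G w <= limn_einf (fun n => (M (mkseq w n))%:E))%E]].

Definition partial_cut (B : seq bool -> Prop) : Prop :=
  forall s t, B s -> B t -> prefix s t -> s = t.

Definition Asec (A : nat -> seq bool -> Prop) n : seq bool -> Prop := A n.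
Definition Alt (A : nat -> seq bool -> Prop) n l : seq bool -> Prop :=
  fun s => A n s /\ (size s < l)%N.
Definition Age (A : nat -> seq bool -> Prop) n l : seq bool -> Prop :=
  fun s => A n s /\ (l <= size s)%N.

Definition schnorr_test {R : realType} (lo hi : seq bool -> R)
  (A : nat -> seq bool -> Prop) : Prop :=
  [/\ rec_setNS A,
      (forall n, (upP lo hi (cylA (Asec A n)) [::] <= ((2 : R) ^- n)%:E)%E) &
      exists e, rec_NN e /\
        forall N n l, (e N n <= l)%N ->
          (upP lo hi (cylA (Asec A n) `\` cylA (Alt A n l)) [::]
             <= ((2 : R) ^- N)%:E)%E].

(* Main.v *)
Require Import Defs.
From HB Require Import structures.
From mathcomp Require Import all_boot all_order all_algebra.
From mathcomp Require Import all_classical all_reals.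
From mathcomp Require Import ereal topology normedtype sequences.
From mathcomp Require Import zify ring lra.
Import Order.TTheory GRing.Theory Num.Theory.
Local Open Scope classical_set_scope.
Local Open Scope ring_scope.

Set Implicit Arguments. Unset Strict Implicit.
Local Notation code := Defs.code.
Local Open Scope nat_scope.

Definition okp p (F : seq nat -> nat) := forall v, Defs.eval p v (F v).

Fixpoint oks (gs : seq prog) (Gs : seq (seq nat -> nat)) : Prop :=
  match gs, Gs with
  | [::], [::] => True
  | g :: gs', G :: Gs' => okp g G /\ oks gs' Gs'
  | _, _ => False
  end.

Lemma oks_evals gs Gs v : oks gs Gs -> Defs.evals gs v (map (fun G => G v) Gs).
Proof.
elim: gs Gs => [|g gs IH] [|G Gs] //=; first by move=> _; constructor.
by move=> [h1 h2]; constructor; [apply: h1 | apply: IH].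
Qed.

Lemma okp_ext p F F' : okp p F -> (forall v, F v = F' v) -> okp p F'.
Proof. by move=> h e v; rewrite -e. Qed.

Lemma okp_zero : okp PZero (fun _ => 0).
Proof. by move=> v; constructor. Qed.
Lemma okp_succ : okp PSucc (fun v => (head 0 v).+1).
Proof. by move=> v; constructor. Qed.
Lemma okp_proj i : okp (PProj i) (fun v => nth 0 v i).
Proof. by move=> v; constructor. Qed.

Lemma okp_comp f F gs Gs : okp f F -> oks gs Gs ->
  okp (PComp f gs) (fun v => F (map (fun G => G v) Gs)).
Proof. move=> hf hg v; apply: (ev_comp (oks_evals v hg)); exact: hf. Qed.

Lemma okp_comp1 f F g1 G1 : okp f F -> okp g1 G1 ->
  okp (PComp f [:: g1]) (fun v => F [:: G1 v]).
Proof. by move=> hf h1; apply: (okp_comp (Gs := [:: G1]) hf). Qed.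
Lemma okp_comp2 f F g1 G1 g2 G2 : okp f F -> okp g1 G1 -> okp g2 G2 ->
  okp (PComp f [:: g1; g2]) (fun v => F [:: G1 v; G2 v]).
Proof. by move=> hf h1 h2; apply: (okp_comp (Gs := [:: G1; G2]) hf). Qed.
Lemma okp_comp4 f F g1 G1 g2 G2 g3 G3 g4 G4 : okp f F -> okp g1 G1 -> okp g2 G2 ->
  okp g3 G3 -> okp g4 G4 ->
  okp (PComp f [:: g1; g2; g3; g4]) (fun v => F [:: G1 v; G2 v; G3 v; G4 v]).
Proof. by move=> hf h1 h2 h3 h4; apply: (okp_comp (Gs := [:: G1; G2; G3; G4]) hf). Qed.

Fixpoint precF (F G : seq nat -> nat) n w :=
  match n with 0 => F w | k.+1 => G [:: k, precF F G k w & w] end.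

Lemma eval_PPrec f g F G : okp f F -> okp g G ->
  forall n w, Defs.eval (PPrec f g) (n :: w) (precF F G n w).
Proof.
move=> hf hg; elim=> [|n IH] w /=; first by constructor.
by apply: ev_precS; [apply: IH | apply: hg].
Qed.

Definition Prec f g := PComp (PPrec f g) [:: PProj 0; PProj 1; PProj 2; PProj 3].

Lemma okp_Prec f g F G : okp f F -> okp g G ->
  okp (Prec f g) (fun v => precF F G (nth 0 v 0) [:: nth 0 v 1; nth 0 v 2; nth 0 v 3]).
Proof.
move=> hf hg v; apply: ev_comp.
  apply: (@oks_evals _ [:: fun v => nth 0 v 0; fun v => nth 0 v 1;
     fun v => nth 0 v 2; fun v => nth 0 v 3]).
  by do ! split => //; apply: okp_proj.
exact: eval_PPrec.
Qed.

Fixpoint cst k := match k with 0 => PZero | k'.+1 => PComp PSucc [:: cst k'] end.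
Lemma okp_cst k : okp (cst k) (fun _ => k).
Proof.
elim: k => [|k IH] /=; first exact: okp_zero.
by apply: okp_ext; first exact: (okp_comp1 okp_succ IH).
Qed.

Ltac okp_solve := repeat first
  [ apply: okp_comp1 | apply: okp_comp2 | apply: okp_comp4
  | apply: okp_proj | apply: okp_zero | apply: okp_succ | apply: okp_cst ].

Definition ADD := Prec (PProj 0) (PComp PSucc [:: PProj 1]).
Lemma okp_ADD : okp ADD (fun v => nth 0 v 0 + nth 0 v 1).
Proof.
apply: okp_ext; first (apply: okp_Prec; okp_solve).
move=> v /=; elim: (nth 0 v 0) => //= n ->; by [].
Qed.

Definition MUL := Prec PZero (PComp ADD [:: PProj 1; PProj 2]).
Lemma okp_MUL : okp MUL (fun v => nth 0 v 0 * nth 0 v 1).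
Proof.
apply: okp_ext; first (apply: okp_Prec; [okp_solve | apply: okp_comp2; [exact: okp_ADD| okp_solve|okp_solve]]).
move=> v /=; elim: (nth 0 v 0) => //= n ->; by rewrite mulSn addnC.
Qed.

Definition PRED := Prec PZero (PProj 0).
Lemma okp_PRED : okp PRED (fun v => (nth 0 v 0).-1).
Proof.
apply: okp_ext; first (apply: okp_Prec; okp_solve).
by move=> v /=; case: (nth 0 v 0).
Qed.

Definition SUBR := Prec (PProj 0) (PComp PRED [:: PProj 1]).
Definition SUB := PComp SUBR [:: PProj 1; PProj 0].
Lemma okp_SUB : okp SUB (fun v => nth 0 v 0 - nth 0 v 1).
Proof.
have h : okp SUBR (fun v => nth 0 v 1 - nth 0 v 0).
  apply: okp_ext; first (apply: okp_Prec; [okp_solve | apply: okp_comp1; [exact: okp_PRED|okp_solve]]).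
  move=> v /=; elim: (nth 0 v 0) => /= [|n ->]; first by rewrite subn0.
  by rewrite subnS.
apply: okp_ext; first (apply: okp_comp2; [exact: h | okp_solve | okp_solve]).
by [].
Qed.

Definition POW2 := Prec (cst 1) (PComp ADD [:: PProj 1; PProj 1]).
Lemma okp_POW2 : okp POW2 (fun v => 2 ^ nth 0 v 0).
Proof.
apply: okp_ext; first (apply: okp_Prec; [okp_solve | apply: okp_comp2; [exact: okp_ADD| okp_solve|okp_solve]]).
move=> v /=; elim: (nth 0 v 0) => //= n ->; by rewrite expnS mul2n addnn.
Qed.

Definition ODD := Prec PZero (PComp SUB [:: cst 1; PProj 1]).
Lemma okp_ODD : okp ODD (fun v => odd (nth 0 v 0)).
Proof.
apply: okp_ext; first (apply: okp_Prec; [okp_solve | apply: okp_comp2; [exact: okp_SUB| okp_solve|okp_solve]]).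
move=> v /=; elim: (nth 0 v 0) => //= n ->; by case: (odd n).
Qed.

Definition HALF := Prec PZero (PComp ADD [:: PProj 1; PComp ODD [:: PProj 0]]).
Lemma okp_HALF : okp HALF (fun v => (nth 0 v 0)./2).
Proof.
apply: okp_ext; first (apply: okp_Prec; [okp_solve | apply: okp_comp2; [exact: okp_ADD| okp_solve| apply: okp_comp1; [exact: okp_ODD|okp_solve]]]).
move=> v /=; elim: (nth 0 v 0) => //= n ->.
by rewrite uphalf_half addnC.
Qed.

Definition ITH := Prec (PProj 0) (PComp HALF [:: PProj 1]).
Lemma okp_ITH : okp ITH (fun v => iter (nth 0 v 0) half (nth 0 v 1)).
Proof.
apply: okp_ext; first (apply: okp_Prec; [okp_solve | apply: okp_comp1; [exact: okp_HALF|okp_solve]]).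
by move=> v /=; elim: (nth 0 v 0) => //= n ->.
Qed.

Definition SUM f := Prec PZero (PComp ADD [:: PProj 1;
   PComp f [:: PProj 0; PProj 2; PProj 3; PProj 4]]).
Lemma okp_SUM f F : okp f F -> okp (SUM f)
  (fun v => \sum_(i < nth 0 v 0) F [:: (i : nat); nth 0 v 1; nth 0 v 2; nth 0 v 3]).
Proof.
move=> hf.
apply: okp_ext; first (apply: okp_Prec; [okp_solve | apply: okp_comp2; [exact: okp_ADD| okp_solve| apply: okp_comp4; [exact: hf|okp_solve..]]]).
move=> v /=; elim: (nth 0 v 0) => /= [|n ->]; first by rewrite big_ord0.
by rewrite big_ord_recr /= addnC.
Qed.

Lemma okp_app2 p f g1 G1 g2 G2 : (forall m n, Defs.eval p [:: m; n] (f m n)) ->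
  okp g1 G1 -> okp g2 G2 -> okp (PComp p [:: g1; g2]) (fun v => f (G1 v) (G2 v)).
Proof.
move=> hp h1 h2 v; apply: (ev_comp (oks_evals (Gs := [:: G1; G2]) v _)) => //.
exact: hp.
Qed.

Lemma okp_ADD2 g1 G1 g2 G2 : okp g1 G1 -> okp g2 G2 ->
  okp (PComp ADD [:: g1; g2]) (fun v => G1 v + G2 v).
Proof. by move=> h1 h2; apply: okp_ext; first exact: (okp_comp2 okp_ADD h1 h2). Qed.
Lemma okp_MUL2 g1 G1 g2 G2 : okp g1 G1 -> okp g2 G2 ->
  okp (PComp MUL [:: g1; g2]) (fun v => G1 v * G2 v).
Proof. by move=> h1 h2; apply: okp_ext; first exact: (okp_comp2 okp_MUL h1 h2). Qed.
Lemma okp_SUB2 g1 G1 g2 G2 : okp g1 G1 -> okp g2 G2 ->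
  okp (PComp SUB [:: g1; g2]) (fun v => G1 v - G2 v).
Proof. by move=> h1 h2; apply: okp_ext; first exact: (okp_comp2 okp_SUB h1 h2). Qed.
Lemma okp_ITH2 g1 G1 g2 G2 : okp g1 G1 -> okp g2 G2 ->
  okp (PComp ITH [:: g1; g2]) (fun v => iter (G1 v) half (G2 v)).
Proof. by move=> h1 h2; apply: okp_ext; first exact: (okp_comp2 okp_ITH h1 h2). Qed.
Lemma okp_POW21 g1 G1 : okp g1 G1 -> okp (PComp POW2 [:: g1]) (fun v => 2 ^ G1 v).
Proof. by move=> h1; apply: okp_ext; first exact: (okp_comp1 okp_POW2 h1). Qed.
Lemma okp_ODD1 g1 G1 : okp g1 G1 -> okp (PComp ODD [:: g1]) (fun v => odd (G1 v)).
Proof. by move=> h1; apply: okp_ext; first exact: (okp_comp1 okp_ODD h1). Qed.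
Lemma okp_succ1 g1 G1 : okp g1 G1 -> okp (PComp PSucc [:: g1]) (fun v => (G1 v).+1).
Proof. by move=> h1; apply: okp_ext; first exact: (okp_comp1 okp_succ h1). Qed.

Ltac okp_solve2 := repeat first
  [ apply: okp_ADD2 | apply: okp_MUL2 | apply: okp_SUB2 | apply: okp_ITH2
  | apply: okp_POW21 | apply: okp_ODD1 | apply: okp_succ1
  | apply: okp_proj | apply: okp_zero | apply: okp_cst ].

Lemma eval_mu f F v y : okp f F -> F (y :: v) = 0 ->
  (forall z, z < y -> F (z :: v) <> 0) -> Defs.eval (PMu f) v y.
Proof.
move=> hf h0 hlt; apply: ev_mu; first by rewrite -h0; apply: hf.
move=> z /hlt hz; exists (F (z :: v)).-1; rewrite prednK; first exact: hf.
by case: (F (z :: v)) hz.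
Qed.

Definition condHI (a b c : nat -> nat -> nat) t y :=
  1 - ((c t y).+1 * 2 - (a t y - b t y) * 2 ^ y).
Definition condLO (a b c : nat -> nat -> nat) t y :=
  1 - ((a t y * 2 ^ y + (c t y).+1 * 2) - ((c t y).+1 * 2 ^ y + b t y * 2 ^ y)).
Definition bodyF a b c a2 b2 c2 (v : seq nat) :=
  let y := nth 0 v 0 in let t := nth 0 v 1 in let x := nth 0 v 2 in
  1 - (x * condHI a b c t y + (1 - x) * condLO a2 b2 c2 t y).

Definition BODYP pa pb pc pa2 pb2 pc2 :=
  let A := PComp pa [:: PProj 1; PProj 0] in
  let B := PComp pb [:: PProj 1; PProj 0] in
  let C := PComp pc [:: PProj 1; PProj 0] in
  let A2 := PComp pa2 [:: PProj 1; PProj 0] in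
  let B2 := PComp pb2 [:: PProj 1; PProj 0] in
  let C2 := PComp pc2 [:: PProj 1; PProj 0] in
  let P := PComp POW2 [:: PProj 0] in
  let HI := PComp SUB [:: cst 1; PComp SUB [:: PComp MUL [:: PComp PSucc [:: C]; cst 2];
              PComp MUL [:: PComp SUB [:: A; B]; P]]] in
  let LO := PComp SUB [:: cst 1; PComp SUB [::
              PComp ADD [:: PComp MUL [:: A2; P]; PComp MUL [:: PComp PSucc [:: C2]; cst 2]];
              PComp ADD [:: PComp MUL [:: PComp PSucc [:: C2]; P]; PComp MUL [:: B2; P]]]] in
  PComp SUB [:: cst 1; PComp ADD [:: PComp MUL [:: PProj 2; HI];
     PComp MUL [:: PComp SUB [:: cst 1; PProj 2]; LO]]].

Lemma okp_BODYP pa pb pc pa2 pb2 pc2 a b c a2 b2 c2 :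
  (forall m n, Defs.eval pa [:: m; n] (a m n)) ->
  (forall m n, Defs.eval pb [:: m; n] (b m n)) ->
  (forall m n, Defs.eval pc [:: m; n] (c m n)) ->
  (forall m n, Defs.eval pa2 [:: m; n] (a2 m n)) ->
  (forall m n, Defs.eval pb2 [:: m; n] (b2 m n)) ->
  (forall m n, Defs.eval pc2 [:: m; n] (c2 m n)) ->
  okp (BODYP pa pb pc pa2 pb2 pc2) (bodyF a b c a2 b2 c2).
Proof.
move=> ha hb hc ha2 hb2 hc2.
apply: okp_ext; first by rewrite /BODYP;
  okp_solve2; (apply: okp_app2; [eassumption | okp_solve2 | okp_solve2]).
by move=> v.
Qed.

Definition mF a b c a2 b2 c2 t x : nat :=
  match pselect (exists y, bodyF a b c a2 b2 c2 [:: y; t; x] == 0) with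
  | left e => ex_minn e
  | right _ => 0
  end.

Lemma eval_MPROG pa pb pc pa2 pb2 pc2 a b c a2 b2 c2 t x :
  (forall m n, Defs.eval pa [:: m; n] (a m n)) ->
  (forall m n, Defs.eval pb [:: m; n] (b m n)) ->
  (forall m n, Defs.eval pc [:: m; n] (c m n)) ->
  (forall m n, Defs.eval pa2 [:: m; n] (a2 m n)) ->
  (forall m n, Defs.eval pb2 [:: m; n] (b2 m n)) ->
  (forall m n, Defs.eval pc2 [:: m; n] (c2 m n)) ->
  (exists y, bodyF a b c a2 b2 c2 [:: y; t; x] = 0) ->
  Defs.eval (PMu (BODYP pa pb pc pa2 pb2 pc2)) [:: t; x] (mF a b c a2 b2 c2 t x).
Proof.
move=> ha hb hc ha2 hb2 hc2 [y0 hy0]; rewrite /mF; case: pselect => [e|[]]; last by exists y0; apply/eqP.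
case: ex_minnP => m /eqP hm hmin.
apply: (eval_mu (okp_BODYP ha hb hc ha2 hb2 hc2)) => // z zm hz.
by have := hmin z (introT eqP hz); rewrite leqNgt zm.
Qed.

Lemma okp_MU2 pa pb pc pa2 pb2 pc2 a b c a2 b2 c2 g1 G1 g2 G2 :
  (forall m n, Defs.eval pa [:: m; n] (a m n)) ->
  (forall m n, Defs.eval pb [:: m; n] (b m n)) ->
  (forall m n, Defs.eval pc [:: m; n] (c m n)) ->
  (forall m n, Defs.eval pa2 [:: m; n] (a2 m n)) ->
  (forall m n, Defs.eval pb2 [:: m; n] (b2 m n)) ->
  (forall m n, Defs.eval pc2 [:: m; n] (c2 m n)) ->
  (forall t x, 0 < t -> exists y, bodyF a b c a2 b2 c2 [:: y; t; x] = 0) ->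
  okp g1 G1 -> okp g2 G2 -> (forall v, 0 < G1 v) ->
  okp (PComp (PMu (BODYP pa pb pc pa2 pb2 pc2)) [:: g1; g2]) (fun v => mF a b c a2 b2 c2 (G1 v) (G2 v)).
Proof.
move=> ha hb hc ha2 hb2 hc2 hex h1 h2 hpos v.
apply: (ev_comp (oks_evals (Gs := [:: G1; G2]) v _)) => //.
by apply: eval_MPROG => //; apply: hex.
Qed.

Lemma guard_pos h : 0 < h + (1 - h). Proof. by case: h. Qed.
Lemma pos_ind h : 1 - (1 - h) = (0 < h). Proof. by case: h. Qed.

Definition termF a b c a2 b2 c2 cc i :=
  (0 < iter i.+1 half cc) *
  mF a b c a2 b2 c2 (iter i.+1 half cc + (1 - iter i.+1 half cc)) (odd (iter i half cc)).
Definition Kf a b c a2 b2 c2 cc := \sum_(i < cc) termF a b c a2 b2 c2 cc i.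

Definition TERM pa pb pc pa2 pb2 pc2 :=
  let H1 := PComp ITH [:: PComp PSucc [:: PProj 0]; PProj 1] in
  let H0 := PComp ITH [:: PProj 0; PProj 1] in
  PComp MUL [:: PComp SUB [:: cst 1; PComp SUB [:: cst 1; H1]];
    PComp (PMu (BODYP pa pb pc pa2 pb2 pc2)) [:: PComp ADD [:: H1; PComp SUB [:: cst 1; H1]];
                                   PComp ODD [:: H0]]].
Definition KPROG pa pb pc pa2 pb2 pc2 := PComp (SUM (TERM pa pb pc pa2 pb2 pc2)) [:: PProj 0; PProj 0].

Lemma okp_KPROG pa pb pc pa2 pb2 pc2 a b c a2 b2 c2 :
  (forall m n, Defs.eval pa [:: m; n] (a m n)) ->
  (forall m n, Defs.eval pb [:: m; n] (b m n)) ->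
  (forall m n, Defs.eval pc [:: m; n] (c m n)) ->
  (forall m n, Defs.eval pa2 [:: m; n] (a2 m n)) ->
  (forall m n, Defs.eval pb2 [:: m; n] (b2 m n)) ->
  (forall m n, Defs.eval pc2 [:: m; n] (c2 m n)) ->
  (forall t x, 0 < t -> exists y, bodyF a b c a2 b2 c2 [:: y; t; x] = 0) ->
  okp (KPROG pa pb pc pa2 pb2 pc2) (fun v => Kf a b c a2 b2 c2 (nth 0 v 0)).
Proof.
move=> ha hb hc ha2 hb2 hc2 hex.
have ht : okp (TERM pa pb pc pa2 pb2 pc2) (fun v => termF a b c a2 b2 c2 (nth 0 v 1) (nth 0 v 0)).
  apply: okp_ext.
    rewrite /TERM; apply: okp_MUL2; first by okp_solve2.
    apply: (okp_MU2 ha hb hc ha2 hb2 hc2 hex); [okp_solve2 | okp_solve2 | ].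
    by move=> v; apply: guard_pos.
  by move=> v; rewrite /termF /= pos_ind.
apply: okp_ext; first exact: (okp_comp2 (okp_SUM ht) (okp_proj 0) (okp_proj 0)).
by [].
Qed.

Definition Tf (e : nat -> nat -> nat) j := \sum_(a < j.+1) \sum_(b < j.+1) e a b.

Definition TPROG pe :=
  let S1 := SUM (PComp pe [:: PProj 1; PProj 0]) in
  let TT := SUM (PComp S1 [:: PProj 1; PProj 0]) in
  PComp TT [:: PComp PSucc [:: PProj 0]; PComp PSucc [:: PProj 0]].

Lemma okp_TPROG pe e : (forall m n, Defs.eval pe [:: m; n] (e m n)) ->
  okp (TPROG pe) (fun v => Tf e (nth 0 v 0)).
Proof.
move=> he.
have h1 := okp_SUM (okp_app2 he (okp_proj 1) (okp_proj 0)).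
have h2 := okp_SUM (okp_comp2 h1 (okp_proj 1) (okp_proj 0)).
apply: okp_ext; first exact: (okp_comp2 h2 (okp_succ1 (okp_proj 0)) (okp_succ1 (okp_proj 0))).
by [].
Qed.

Definition gF a b c a2 b2 c2 e N cc := N + Tf e (N + Kf a b c a2 b2 c2 cc).+1.
Definition GPROG pa pb pc pa2 pb2 pc2 pe :=
  PComp ADD [:: PProj 0; PComp (TPROG pe) [:: PComp PSucc [:: PComp ADD [:: PProj 0;
      PComp (KPROG pa pb pc pa2 pb2 pc2) [:: PProj 1]]]]].

Lemma rec2_gF a b c a2 b2 c2 e :
  rec2 a -> rec2 b -> rec2 c -> rec2 a2 -> rec2 b2 -> rec2 c2 -> rec2 e ->
  (forall t x, 0 < t -> exists y, bodyF a b c a2 b2 c2 [:: y; t; x] = 0) ->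
  rec2 (gF a b c a2 b2 c2 e).
Proof.
move=> [pa ha] [pb hb] [pc hc] [pa2 ha2] [pb2 hb2] [pc2 hc2] [pe he] hex.
exists (GPROG pa pb pc pa2 pb2 pc2 pe) => m n.
have hk := okp_KPROG ha hb hc ha2 hb2 hc2 hex.
have hT := okp_TPROG he.
have := okp_ADD2 (okp_proj 0) (okp_comp1 hT (okp_succ1 (okp_ADD2 (okp_proj 0) (okp_comp1 hk (okp_proj 1))))).
by move/(_ [:: m; n]).
Qed.

Lemma bodyF_hi a b c a2 b2 c2 y t x : 0 < x ->
  (bodyF a b c a2 b2 c2 [:: y; t; x] == 0) = ((c t y).+1 * 2 <= (a t y - b t y) * 2 ^ y).
Proof.
move=> x0; rewrite /bodyF /condHI /=.
have -> : 1 - x = 0 by lia.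
rewrite mul0n addn0; set u := (_ * 2); set w := (_ * 2 ^ y).
case: (leqP u w) => h.
  have -> : u - w = 0 by lia.
  by rewrite muln1; apply/eqP; lia.
have -> : 1 - (u - w) = 0 by lia.
by rewrite muln0.
Qed.

Lemma bodyF_lo a b c a2 b2 c2 y t :
  (bodyF a b c a2 b2 c2 [:: y; t; 0] == 0) =
  (a2 t y * 2 ^ y + (c2 t y).+1 * 2 <= (c2 t y).+1 * 2 ^ y + b2 t y * 2 ^ y).
Proof.
rewrite /bodyF /condLO /= mul0n add0n mul1n.
set u := (_ + _ * 2); set w := (_ + _).
case: (leqP u w) => h.
  have -> : u - w = 0 by lia.
  by [].
have -> : 1 - (u - w) = 0 by lia.
by [].
Qed.

Lemma code_rcons s (x : bool) : code (rcons s x) = (code s).*2 + x.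
Proof. by rewrite /code foldl_rcons. Qed.

Lemma code_gt0 s : 0 < code s.
Proof. elim/last_ind: s => // s x IH; rewrite code_rcons; move: IH; rewrite -double_gt0; lia. Qed.

Lemma code_surj t : 0 < t -> exists s, code s = t.
Proof.
elim/ltn_ind: t => t IH t0.
case: (ltnP t 2) => t2.
  by exists [::]; have -> : t = 1 by lia.
have h1 : t./2 < t by rewrite ltn_half_double; lia.
have h2 : 0 < t./2 by rewrite geq_half_double; lia.
have [s hs] := IH _ h1 h2.
exists (rcons s (odd t)); rewrite code_rcons hs; move: (odd_double_half t); lia.
Qed.

Lemma iter_half_le k c : iter k half c <= c - k.
Proof.
elim: k => [|k IH] /=; first by rewrite subn0.
have h : forall m, half m <= m.-1 by case=> // m; rewrite -ltnS prednK ?ltn_half_double //; lia.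
apply: leq_trans (h _) _; move: IH; lia.
Qed.

Lemma Kf_ext a b c a2 b2 c2 cc L : cc <= L -> \sum_(i < L) termF a b c a2 b2 c2 cc i = Kf a b c a2 b2 c2 cc.
Proof.
move=> hL; rewrite /Kf -!(big_mkord xpredT (fun i => termF a b c a2 b2 c2 cc i)).
rewrite (big_cat_nat (leq0n cc) hL) /= [\sum_(cc <= i < L) _]big1_seq ?addn0 // => i.
move=> /andP[_]; rewrite mem_index_iota => /andP[hi _].
have := iter_half_le i.+1 cc; rewrite /termF.
have -> : cc - i.+1 = 0 by lia.
by rewrite leqn0 => /eqP ->.
Qed.

Lemma Kf_rcons a b c a2 b2 c2 s (x : bool) :
  Kf a b c a2 b2 c2 (code (rcons s x)) = Kf a b c a2 b2 c2 (code s) + mF a b c a2 b2 c2 (code s) x.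
Proof.
rewrite code_rcons; have c0 := code_gt0 s; set cc := code s in c0 *.
have e : (cc.*2 + x) = (cc.*2 + x - 1).+1 by lia.
have e2 : forall i, termF a b c a2 b2 c2 (cc.*2 + x) i.+1 = termF a b c a2 b2 c2 cc i.
  by move=> i; rewrite /termF !iterSr (addnC (cc.*2)) half_bit_double.
rewrite {1}/Kf; pose F := fun i => termF a b c a2 b2 c2 (cc.*2 + x) i.
rewrite -(big_mkord xpredT F) e big_nat_recl // addnC; congr (_ + _).
  have -> : \sum_(0 <= i < cc.*2 + x - 1) F i.+1 =
            \sum_(0 <= i < cc.*2 + x - 1) termF a b c a2 b2 c2 cc i.
    by apply: eq_bigr => i _; exact: e2.
  by rewrite big_mkord Kf_ext //; lia.
rewrite /F /termF /= (addnC (cc.*2)) half_bit_double c0 mul1n.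
have -> : cc + (1 - cc) = cc by lia.
by rewrite oddD odd_double /=; clear e e2 F; case: x.
Qed.
Local Open Scope ring_scope.

Lemma hi_core (R : realType) (A B C1 P : nat) (hC : (0 < C1)%N) (e : R) :
  0 < e -> e * P%:R = 1 ->
  (C1 * 2 <= (A - B) * P)%N -> 2 * e <= (A%:R - B%:R) / C1%:R.
Proof.
move=> e0 eP h.
have ba : (B < A)%N.
  rewrite -subn_gt0; move: h hC; case: (A - B)%N => //; rewrite mul0n; lia.
have hR : (C1 * 2)%:R <= ((A - B) * P)%:R :> R by rewrite ler_nat.
rewrite !natrM natrB ?(ltnW ba) // in hR.
rewrite ler_pdivlMr ?ltr0n ?hC //.
have := ler_wpM2r (ltW e0) hR.
rewrite -[_ * P%:R * e]mulrA [P%:R * e]mulrC eP mulr1.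
lra.
Qed.

Lemma hi_exist (R : realType) (A B C1 P : nat) (hC : (0 < C1)%N) (e g : R) :
  0 < e -> e * P%:R = 1 -> 3 * e <= g ->
  `|g - (A%:R - B%:R) / C1%:R| <= e ->
  (C1 * 2 <= (A - B) * P)%N.
Proof.
move=> e0 eP h3; set q := (_ / _); rewrite ler_distl => /andP[h1 h2].
have hq : 2 * e <= q by clearbody q; lra.
rewrite /q ler_pdivlMr ?ltr0n ?hC // in hq.
have C0 : 0 < C1%:R :> R by rewrite ltr0n hC.
have ba : (B < A)%N.
  rewrite -(ltr_nat R); have := mulr_gt0 e0 C0; lra.
rewrite -(ler_nat R) !natrM natrB ?(ltnW ba) //.
have P0 : 0 <= P%:R :> R by [].
have := ler_wpM2r P0 hq.
have -> : 2 * e * C1%:R * P%:R = C1%:R * 2 * (e * P%:R) by ring.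
rewrite eP mulr1; lra.
Qed.

Lemma lo_core (R : realType) (A B C1 P : nat) (hC : (0 < C1)%N) (e : R) :
  0 < e -> e * P%:R = 1 ->
  (A * P + C1 * 2 <= C1 * P + B * P)%N -> (A%:R - B%:R) / C1%:R <= 1 - 2 * e.
Proof.
move=> e0 eP h.
have hR : (A * P + C1 * 2)%:R <= (C1 * P + B * P)%:R :> R by rewrite ler_nat.
rewrite !natrD !natrM in hR.
rewrite ler_pdivrMr ?ltr0n ?hC //.
have := ler_wpM2r (ltW e0) hR.
have -> : (A%:R * P%:R + C1%:R * 2) * e = A%:R * (e * P%:R) + C1%:R * 2 * e by ring.
have -> : (C1%:R * P%:R + B%:R * P%:R) * e = C1%:R * (e * P%:R) + B%:R * (e * P%:R) by ring.
rewrite eP !mulr1; lra.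
Qed.

Lemma lo_exist (R : realType) (A B C1 P : nat) (hC : (0 < C1)%N) (e g : R) :
  0 < e -> e * P%:R = 1 -> 3 * e <= 1 - g ->
  `|g - (A%:R - B%:R) / C1%:R| <= e ->
  (A * P + C1 * 2 <= C1 * P + B * P)%N.
Proof.
move=> e0 eP h3; set q := (_ / _); rewrite ler_distl => /andP[h1 h2].
have hq : q <= 1 - 2 * e by clearbody q; lra.
rewrite /q ler_pdivrMr ?ltr0n ?hC // in hq.
rewrite -(ler_nat R) !natrD !natrM.
have P0 : 0 <= P%:R :> R by [].
have := ler_wpM2r P0 hq.
have -> : (1 - 2 * e) * C1%:R * P%:R = C1%:R * P%:R - 2 * C1%:R * (e * P%:R) by ring.
rewrite eP mulr1; lra.
Qed.

Lemma limn_einf_le (R : realType) (u : (\bar R)^nat) K c :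
  (forall n, (K <= n)%N -> (u n <= c)%E) -> (limn_einf u <= c)%E.
Proof.
move=> h; rewrite limn_einf_lim (cvg_lim _ (@cvg_einfs_sup _ u)) //.
apply: ge_ereal_sup => _ [n _ <-] /=.
apply: le_trans (ereal_inf_lbound _) (h (maxn n K) _); last by rewrite leq_maxr.
by exists (maxn n K) => //; rewrite /= leq_maxl.
Qed.

Lemma upE_ge (R : realType) (l h p : R) f : 0 <= l -> l <= p -> p <= h -> h <= 1 ->
  p * f true + (1 - p) * f false <= upE l h f.
Proof.
move=> l0 lp ph h1; rewrite /upE; apply: sup_upper_bound; last first.
  by exists p => //=; apply/andP.
split; first by exists (p * f true + (1 - p) * f false), p => //=; apply/andP.
exists (`|f true| + `|f false|) => _ [q /andP[lq qh] <-].
have q0 : 0 <= q by lra.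
have q1 : 0 <= 1 - q by lra.
have := ler_wpM2l q0 (ler_norm (f true)).
have := ler_wpM2l q1 (ler_norm (f false)).
have := ler_wpM2l q0 (normr_ge0 (f false)).
have := ler_wpM2l q1 (normr_ge0 (f true)).
rewrite !mulr0.
nra.
Qed.

Lemma upE_min (R : realType) (lo hi : seq bool -> R) s f :
  forecasting_system lo hi ->
  f true <= upE (lo s) (hi s) f \/ f false <= upE (lo s) (hi s) f.
Proof.
move=> fs; have [l0 [lh h1]] := fs s.
have := upE_ge f l0 (lexx _) lh h1.
case: (lerP (f true) (f false)) => hf hu.
  left; apply: le_trans hu; have : 0 <= (1 - lo s) * (f false - f true).
    by apply: mulr_ge0; lra.
  lra.
right; apply: le_trans hu; have : 0 <= lo s * (f true - f false).
  by apply: mulr_ge0; lra.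
lra.
Qed.

Definition stepP (R : realType) (M : seq bool -> R) u :=
  if M (rcons u true) <= M u then rcons u true else rcons u false.

Lemma stepP_le (R : realType) (lo hi : seq bool -> R) M u :
  forecasting_system lo hi -> supermartingale lo hi M -> M (stepP M u) <= M u.
Proof.
move=> fs sm; rewrite /stepP; case: ifP => // h.
have := sm u; case: (upE_min u (fun x => M (rcons u x)) fs) => /= hh hs.
  by move: h; rewrite (le_trans hh hs).
exact: le_trans hh hs.
Qed.

Lemma iter_stepP_prefix (R : realType) (M : seq bool -> R) t k d :
  exists r, iter (k + d) (stepP M) t = iter k (stepP M) t ++ r.
Proof.
elim: d => [|d [r hr]]; first by exists [::]; rewrite addn0 cats0.
exists (rcons r (if M (rcons (iter (k + d) (stepP M) t) true) <= M (iter (k + d) (stepP M) t) then true else false)).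
rewrite addnS /= -cats1 catA -hr cats1 /stepP; by case: ifP.
Qed.

Lemma size_iter_stepP (R : realType) (M : seq bool -> R) t k :
  size (iter k (stepP M) t) = (size t + k)%N.
Proof.
elim: k => [|k IH] /=; first by rewrite addn0.
by rewrite /stepP; case: ifP => _; rewrite size_rcons IH addnS.
Qed.

Lemma nth_iter_stepP (R : realType) (M : seq bool -> R) t k m i :
  (k <= m)%N -> (i < size (iter k (stepP M) t))%N ->
  nth false (iter m (stepP M) t) i = nth false (iter k (stepP M) t) i.
Proof.
move=> km hi; have [r hr] := iter_stepP_prefix M t k (m - k).
by rewrite subnKC in hr => //; rewrite hr nth_cat hi.
Qed.

Lemma mkseq_path (R : realType) (M : seq bool -> R) t k :
  mkseq (fun i => nth false (iter i.+1 (stepP M) t) i) (size t + k) =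
  iter k (stepP M) t.
Proof.
apply: (@eq_from_nth _ false); first by rewrite size_mkseq size_iter_stepP.
move=> i; rewrite size_mkseq => hi; rewrite nth_mkseq //.
have s1 : forall j, size (iter j (stepP M) t) = (size t + j)%N by move=> j; exact: size_iter_stepP.
rewrite -(@nth_iter_stepP _ M t i.+1 (maxn i.+1 k) i) ?leq_maxl ?s1 //; last by lia.
by rewrite (@nth_iter_stepP _ M t k (maxn i.+1 k) i) ?leq_maxr ?s1.
Qed.

Lemma sm_nonneg (R : realType) (lo hi : seq bool -> R) M :
  forecasting_system lo hi -> supermartingale lo hi M ->
  (forall w, (0 <= limn_einf (fun n => (M (mkseq w n))%:E))%E) ->
  forall t, 0 <= M t.
Proof.
move=> fs sm hw t; rewrite leNgt; apply/negP => hneg.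
pose w := fun i => nth false (iter i.+1 (stepP M) t) i.
have hP : forall k, M (iter k (stepP M) t) <= M t.
  elim=> [|k IH] //=; exact: le_trans (stepP_le _ fs sm) IH.
have : (limn_einf (fun n => (M (mkseq w n))%:E) <= (M t)%:E)%E.
  apply: (@limn_einf_le _ _ (size t)) => n hn.
  by rewrite -(subnKC hn) mkseq_path lee_fin.
move=> h; have := le_trans (hw w) h; rewrite lee_fin => h0.
by move: hneg; rewrite ltNge h0.
Qed.

Lemma step_bound (R : realType) (lo hi : seq bool -> R) M u (x : bool) (m : nat) :
  forecasting_system lo hi -> supermartingale lo hi M -> (forall t, 0 <= M t) ->
  (if x then (2:R)^-m <= hi u else (2:R)^-m <= 1 - lo u) ->
  M (rcons u x) <= 2 ^+ m * M u.
Proof.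
move=> fs sm M0 hx; have [l0 [lh h1]] := fs u.
have sU := sm u.
have e0 : 0 < (2:R)^-m by rewrite invr_gt0 exprn_gt0.
have key : (2:R)^-m * M (rcons u x) <= M u.
  case: x hx => hx.
    have := upE_ge (fun x => M (rcons u x)) l0 lh (lexx _) h1.
    have := ler_wpM2r (M0 (rcons u true)) hx.
    have hh1 : 0 <= 1 - hi u by lra.
    have := mulr_ge0 hh1 (M0 (rcons u false)).
    move=> /= a1 a2 a3; lra.
  have := upE_ge (fun x => M (rcons u x)) l0 (lexx _) lh h1.
  have := ler_wpM2r (M0 (rcons u false)) hx.
  have := mulr_ge0 l0 (M0 (rcons u true)).
  move=> /= a1 a2 a3; lra.
have := ler_wpM2l (ltW (exprn_gt0 m (ltr0Sn _ 1))) key.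
by rewrite mulrA divff ?mul1r // expf_neq0.
Qed.

Lemma growth_bound (R : realType) (lo hi : seq bool -> R) M
  (K : seq bool -> nat) (m : seq bool -> bool -> nat) :
  forecasting_system lo hi -> supermartingale lo hi M -> (forall t, 0 <= M t) ->
  K [::] = 0%N -> (forall u x, K (rcons u x) = (K u + m u x)%N) ->
  (forall u, (2:R)^-(m u true) <= hi u) -> (forall u, (2:R)^-(m u false) <= 1 - lo u) ->
  forall s, M s <= 2 ^+ K s * M [::].
Proof.
move=> fs sm M0 K0 KS hh hl; elim/last_ind => [|s x IH]; first by rewrite K0 mul1r.
rewrite KS exprD -mulrA.
apply: le_trans (step_bound fs sm M0 (m := m s x) _) _; first by case: x.
by rewrite mulrCA; apply: ler_wpM2l => //; exact: exprn_ge0.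
Qed.

Lemma pow_identity (R : realType) (N K : nat) :
  (2:R) ^+ K * ((2:R) ^- (N + K).+1 + (2:R) ^- (N + K).+1) = (2:R) ^- N.
Proof.
have h2 : (2:R) != 0 by rewrite pnatr_eq0.
have hN : (2:R) ^+ N != 0 by rewrite expf_neq0.
have hK : (2:R) ^+ K != 0 by rewrite expf_neq0.
rewrite exprS exprD; field.
by rewrite hN hK.
Qed.

Lemma upP_key (R : realType) (lo hi : seq bool -> R) (G G' : set (nat -> bool)) s K N :
  forecasting_system lo hi ->
  (forall M, supermartingale lo hi M -> (forall t, 0 <= M t) -> M s <= 2 ^+ K * M [::]) ->
  G' `<=` G ->
  (upP lo hi G [::] <= ((2:R) ^- (N + K).+1)%:E)%E ->
  (upP lo hi G' s <= ((2:R) ^- N)%:E)%E.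
Proof.
move=> fs H sub hG.
set d := (2:R) ^- (N + K).+1.
have d0 : 0 < d by rewrite invr_gt0 exprn_gt0.
have : (upP lo hi G [::] < (d + d)%:E)%E.
  by apply: le_lt_trans hG _; rewrite lte_fin ltrDl.
move/ereal_inf_lt => [_ [M [sm hlim] <-]]; rewrite lte_fin => hM.
have ind0 : forall (G0 : set (nat -> bool)) w, (0 <= @indicE R G0 w)%E.
  by move=> G0 w; rewrite /indicE lee_fin; case: asboolP.
have M0 : forall t, 0 <= M t.
  apply: sm_nonneg fs sm _ => w; apply: le_trans (hlim w _) => //.
apply: le_trans (ereal_inf_lbound _) _.
  exists M => //; split => // w cw.
  apply: le_trans (hlim w _) => //.
  rewrite /indicE lee_fin; case: (asboolP (G' w)) => [/sub hw|_];
    case: (asboolP (G w)) => //.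
rewrite lee_fin -(pow_identity R N K).
apply: le_trans (H M sm M0) _.
apply: ler_wpM2l; [exact: exprn_ge0 | exact: ltW].
Qed.

Lemma mF_spec a b c a2 b2 c2 t x :
  (exists y, bodyF a b c a2 b2 c2 [:: y; t; x] = 0%N) ->
  bodyF a b c a2 b2 c2 [:: mF a b c a2 b2 c2 t x; t; x] = 0%N.
Proof.
move=> [y0 hy0]; rewrite /mF; case: pselect => [e|[]]; last by exists y0; apply/eqP.
by case: ex_minnP => m /eqP.
Qed.

Lemma exists_pow3 (R : realType) (g : R) : 0 < g -> exists y : nat, 3 * (2:R) ^- y <= g.
Proof.
move=> g0; have h0 : 0 <= 3 / g by rewrite divr_ge0 // ltW.
have hb := archi_boundP h0; set y := Num.Def.archi_bound _ in hb.
exists y.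
have hy : (y%:R : R) <= (2 ^ y)%:R by rewrite ler_nat ltnW // ltn_expl.
rewrite natrX in hy.
have p0 : 0 < (2:R) ^+ y by rewrite exprn_gt0.
rewrite -[g](mulfK (lt0r_neq0 p0)) ler_pM2r ?invr_gt0 //.
have := lt_le_trans hb hy; rewrite ltr_pdivrMr // mulrC => h; exact: ltW.
Qed.

Lemma Tf_mono e j j' : (j <= j')%N -> (Tf e j <= Tf e j')%N.
Proof.
elim: j' => [|j' IH]; first by rewrite leqn0 => /eqP ->.
rewrite leq_eqVlt => /orP[/eqP -> //|]; rewrite ltnS => /IH h.
apply: leq_trans h _; rewrite /Tf [X in (_ <= X)%N]big_ord_recr /=.
apply: leq_trans (leq_addr _ _); apply: leq_sum => i _.
by rewrite [X in (_ <= X)%N]big_ord_recr /= leq_addr.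
Qed.

Lemma Tf_ge e j x y : (x <= j)%N -> (y <= j)%N -> (e x y <= Tf e j)%N.
Proof.
move=> hx hy; rewrite /Tf.
have hx' : (x < j.+1)%N by []. have hy' : (y < j.+1)%N by [].
rewrite (bigD1 (Ordinal hx')) //= (bigD1 (Ordinal hy')) //=.
by rewrite -addnA leq_addr.
Qed.

Definition approx (R : realType) (f : seq bool -> R) (a b c : nat -> nat -> nat) :=
  forall s n, `| f s - ((a (code s) n)%:R - (b (code s) n)%:R) / (c (code s) n).+1%:R |
                <= (2 : R) ^- n.

Lemma eP_lemma (R : realType) y : (2:R) ^- y * (2 ^ y)%:R = 1.
Proof. by rewrite natrX mulVf // expf_neq0 // pnatr_eq0. Qed.

Lemma e_pos (R : realType) y : 0 < (2:R) ^- y.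
Proof. by rewrite invr_gt0 exprn_gt0. Qed.

Lemma hi_step (R : realType) (f : seq bool -> R) a b c u y : approx f a b c ->
  ((c (code u) y).+1 * 2 <= (a (code u) y - b (code u) y) * 2 ^ y)%N -> (2:R) ^- y <= f u.
Proof.
move=> hap h; have := hi_core (ltn0Sn _) (e_pos R y) (eP_lemma R y) h.
have := hap u y; set q := (_ / _); rewrite ler_distl => /andP[h1 h2] h3.
clearbody q; lra.
Qed.

Lemma lo_step (R : realType) (f : seq bool -> R) a b c u y : approx f a b c ->
  (a (code u) y * 2 ^ y + (c (code u) y).+1 * 2 <= (c (code u) y).+1 * 2 ^ y + b (code u) y * 2 ^ y)%N ->
  (2:R) ^- y <= 1 - f u.
Proof.
move=> hap h; have := lo_core (ltn0Sn _) (e_pos R y) (eP_lemma R y) h.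
have := hap u y; set q := (_ / _); rewrite ler_distl => /andP[h1 h2] h3.
clearbody q; lra.
Qed.

Lemma hi_ex (R : realType) (f : seq bool -> R) a b c u : approx f a b c -> 0 < f u ->
  exists y, ((c (code u) y).+1 * 2 <= (a (code u) y - b (code u) y) * 2 ^ y)%N.
Proof.
move=> hap /exists_pow3 [y hy]; exists y.
exact: (hi_exist (ltn0Sn _) (e_pos R y) (eP_lemma R y) hy (hap u y)).
Qed.

Lemma lo_ex (R : realType) (f : seq bool -> R) a b c u : approx f a b c -> f u < 1 ->
  exists y, (a (code u) y * 2 ^ y + (c (code u) y).+1 * 2 <= (c (code u) y).+1 * 2 ^ y + b (code u) y * 2 ^ y)%N.
Proof.
move=> hap hu; have : 0 < 1 - f u by lra.
move=> /exists_pow3 [y hy]; exists y.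
exact: (lo_exist (ltn0Sn _) (e_pos R y) (eP_lemma R y) hy (hap u y)).
Qed.

Lemma age_sub (A : nat -> seq bool -> Prop) n l : partial_cut (Asec A n) ->
  cylA (Age A n l) `<=` cylA (Asec A n) `\` cylA (Alt A n l).
Proof.
move=> pc w [t [At lt] ct]; split; first by exists t.
move=> [u [Au ul] cu].
have hp : prefix u t.
  rewrite prefixE; apply/eqP; rewrite -ct -cu /mkseq -map_take take_iota.
  by rewrite !size_map !size_iota /minn ifT //; apply: leq_trans ul lt.
have eut := pc u t Au At hp; rewrite eut in ul.
by move: (leq_trans ul lt); rewrite ltnn.
Qed.

Lemma age_sub2 (A : nat -> seq bool -> Prop) n l :
  cylA (Age A n l) `<=` cylA (Asec A n).
Proof. by move=> w [t [At _] ct]; exists t. Qed.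

Lemma pow_mono (R : realType) (n m : nat) : (m <= n)%N -> (2:R) ^- n <= (2:R) ^- m.
Proof.
move=> mn; rewrite -!exprVn; apply: ler_wiXn2l => //.
by rewrite invf_le1 ?ler1n.
Qed.

Unset Implicit Arguments.

Theorem lemma8p3 (R : realType) (lo hi : seq bool -> R)
  (A : nat -> seq bool -> Prop) :
  forecasting_system lo hi -> non_degenerate lo hi -> computable_fs lo hi ->
  schnorr_test lo hi A ->
  (forall n, partial_cut (Asec A n)) ->
  exists et : nat -> seq bool -> nat,
    [/\ rec_NS et,
        (forall s, growth (fun N => et N s)) &
        forall N n s l, (et N s <= l)%N ->
          (upP lo hi (cylA (Age A n l)) s <= ((2 : R) ^- N)%:E)%E].
Proof.
move=> fs nd [[a2 [b2 [c2 [ra2 rb2 rc2 hap2]]]] [a [b [c [ra rb rc hap]]]]].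
move=> [recA hP [e [rece he]]] pcut.
have apH : approx hi a b c by [].
have apL : approx lo a2 b2 c2 by [].
have hex : forall t x, (0 < t)%N -> exists y, bodyF a b c a2 b2 c2 [:: y; t; x] = 0%N.
  move=> t x /code_surj [u <-].
  case: x => [|x].
    have [y hy] := lo_ex apL (proj1 (nd u)); exists y; apply/eqP.
    by rewrite (@bodyF_lo a b c a2 b2 c2).
  have [y hy] := hi_ex apH (proj2 (nd u)); exists y; apply/eqP.
  by rewrite (@bodyF_hi a b c a2 b2 c2 y (code u) x.+1).
pose mm u (x : bool) := mF a b c a2 b2 c2 (code u) x.
pose K u := Kf a b c a2 b2 c2 (code u).
have Hgr : forall s M, supermartingale lo hi M -> (forall t, 0 <= M t) ->
    M s <= 2 ^+ K s * M [::].
  move=> s M sm M0; apply: (growth_bound (m := mm)) => //.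
  - by rewrite /K /Kf big_ord1 /termF.
  - by move=> u x; rewrite /K Kf_rcons.
  - move=> u; apply: (hi_step (u := u) apH).
    by rewrite -(@bodyF_hi a b c a2 b2 c2 _ _ 1) //; apply/eqP; apply: mF_spec; apply: hex; exact: code_gt0.
  - move=> u; apply: (lo_step (u := u) apL).
    by rewrite -(@bodyF_lo a b c a2 b2 c2); apply/eqP; apply: mF_spec; apply: hex; exact: code_gt0.
have hg := rec2_gF ra rb rc ra2 rb2 rc2 rece hex.
exists (fun N s => gF a b c a2 b2 c2 e N (code s)); split.
- by exists (gF a b c a2 b2 c2 e).
- move=> s; split; [|split].
  + case: hg => p hp; exists (PComp p [:: PProj 0; cst (code s)]) => N.
    exact: (okp_app2 hp (okp_proj 0) (okp_cst (code s)) [:: N]).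
  + move=> m n mn; rewrite /gF; apply: leq_add => //; apply: Tf_mono; lia.
  + by move=> m; exists m; rewrite /gF leq_addr.
- move=> N n s l hl.
  have Hs := Hgr s.
  case: (leqP n (N + K s).+1) => hn.
    apply: (upP_key fs Hs (age_sub (l := l) (pcut n))).
    apply: he; apply: leq_trans hl; rewrite /gF.
    by apply: leq_trans (leq_addl _ _); apply: Tf_ge.
  apply: (upP_key fs Hs (@age_sub2 A n l)).
  apply: le_trans (hP n) _; rewrite lee_fin; apply: pow_mono; exact: ltnW.
Qed.
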